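(* Let $C$ be a Reedy category. The fully faithful functor $\mathrm{Down}(C)\hookrightarrow\mathrm{Down}_*(C)$ induced by the inclusion $\int N^{--,+}_+(C)\subseteq\int N^{-,+}(C)$ is an equivalence of categories.
   Context: A Reedy category $(C,C_-,C_+)$: wide subcategories with unique factorization of every morphism as ($C_-$ then $C_+$), membership in $C_\pm$ decidable, and the relation ($x<'y$ iff non-identity $x\to y$ in $C_+$ or non-identity $y\to x$ in $C_-$) well-founded. $\Delta$: finite ordinals $[n]$ and order-preserving maps. $\int N^{-,+}(C)$: objects $([n],X)$ with $X\colon[n]\to C$ a functor sending all morphisms into $C_-$; morphisms $([m],X)\to([n],Y)$ are $(\alpha,\theta)$ with $\alpha\colon[m]\to[n]$ in $\Delta$ and $\theta\colon X\Rightarrow Y\circ\alpha$ with all components in $C_+$; composition $(\beta,\varphi)\circ(\alpha,\theta)=(\beta\alpha,(\varphi\alpha)\circ\theta)$. $\int N^{--,+}_+(C)$: the full subcategory on objects whose $X$ reflects identities. Order on hom-sets: $(\alpha,\theta)\le(\alpha',\theta')$ iff $\alpha\le\alpha'$ pointwise and $\theta'_i=Y(\alpha(i)\le\alpha'(i))\circ\theta_i$ for all $i$ (compatible with composition). $\mathrm{Down}_*(C)$ and $\mathrm{Down}(C)$ are obtained from $\int N^{-,+}(C)$ and $\int N^{--,+}_+(C)$ by quotienting each hom-set by the equivalence relation generated by $\le$. *)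

(* Defs.v *)
From mathcomp Require Import all_boot.
From Stdlib Require Import Relation_Definitions Relation_Operators.

Set Implicit Arguments.
Unset Strict Implicit.
Unset Printing Implicit Defensive.

Record Category := {
  Ob :> Type;
  Hom : Ob -> Ob -> Type;
  idc : forall a, Hom a a;
  cmp : forall a b c, Hom b c -> Hom a b -> Hom a c;
  cmp_id_l : forall a b (f : Hom a b), cmp (idc b) f = f;
  cmp_id_r : forall a b (f : Hom a b), cmp f (idc a) = f;
  cmp_assoc : forall a b c d (f : Hom a b) (g : Hom b c) (h : Hom c d),
      cmp h (cmp g f) = cmp (cmp h g) f
}.
Arguments Hom : clear implicits.
Arguments idc {C} a : rename.
Arguments cmp {C a b c} _ _ : rename.

Definition is_id (C : Category) (a b : C) (f : Hom C a b) : Prop :=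
  exists e : a = b, eq_rect a (Hom C a) (idc a) b e = f.

Definition reedy_lt (C : Category)
    (mi pl : forall a b : C, Hom C a b -> bool) (x y : C) : Prop :=
  (exists f : Hom C x y, pl x y f /\ ~ is_id f) \/
  (exists g : Hom C y x, mi y x g /\ ~ is_id g).

Record Reedy (C : Category) := {
  minus : forall a b : C, Hom C a b -> bool;
  plus : forall a b : C, Hom C a b -> bool;
  minus_id : forall a, minus (idc a);
  plus_id : forall a, plus (idc a);
  minus_cmp : forall a b c (f : Hom C a b) (g : Hom C b c),
      minus f -> minus g -> minus (cmp g f);
  plus_cmp : forall a b c (f : Hom C a b) (g : Hom C b c),
      plus f -> plus g -> plus (cmp g f);
  fact_exists : forall a b (f : Hom C a b),
      exists (c : C) (g : Hom C a c) (h : Hom C c b),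
        [/\ minus g, plus h & cmp h g = f];
  fact_unique : forall a b (c c' : C) (g : Hom C a c) (h : Hom C c b)
      (g' : Hom C a c') (h' : Hom C c' b),
      minus g -> plus h -> minus g' -> plus h' -> cmp h g = cmp h' g' ->
      existT (fun c => (Hom C a c * Hom C c b)%type) c (g, h) =
      existT (fun c => (Hom C a c * Hom C c b)%type) c' (g', h');
  reedy_wf : well_founded (reedy_lt minus plus)
}.
Arguments minus {C} R {a b} f : rename.
Arguments plus {C} R {a b} f : rename.

Record CatData := {
  cob :> Type;
  chom : cob -> cob -> Type;
  cheq : forall a b, relation (chom a b);
  cid : forall a, chom a a;
  ccomp : forall a b c, chom b c -> chom a b -> chom a c
}.
Arguments chom : clear implicits.
Arguments cheq {C a b} _ _ : rename.
Arguments cid {C} a : rename.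
Arguments ccomp {C a b c} _ _ : rename.

Record Functor (C D : CatData) := {
  fo :> C -> D;
  fm : forall a b, chom C a b -> chom D (fo a) (fo b);
  fm_proper : forall a b (f g : chom C a b), cheq f g -> cheq (fm f) (fm g);
  fm_id : forall a, cheq (fm (cid a)) (cid (fo a));
  fm_comp : forall a b c (f : chom C a b) (g : chom C b c),
      cheq (fm (ccomp g f)) (ccomp (fm g) (fm f))
}.
Arguments fm {C D} F {a b} f : rename.

Definition is_equivalence (C D : CatData) (F : Functor C D) : Prop :=
  exists (G : Functor D C)
         (eta : forall a : C, chom C a (G (F a)))
         (etai : forall a : C, chom C (G (F a)) a)
         (eps : forall d : D, chom D (F (G d)) d)
         (epsi : forall d : D, chom D d (F (G d))),
    [/\ forall a, cheq (ccomp (etai a) (eta a)) (cid a),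
        forall a, cheq (ccomp (eta a) (etai a)) (cid (G (F a)))
      & forall a b (f : chom C a b),
          cheq (ccomp (eta b) f) (ccomp (fm G (fm F f)) (eta a))] /\
    [/\ forall d, cheq (ccomp (epsi d) (eps d)) (cid (F (G d))),
        forall d, cheq (ccomp (eps d) (epsi d)) (cid d)
      & forall d e (g : chom D d e),
          cheq (ccomp (eps e) (fm F (fm G g))) (ccomp g (eps d))].

Section IntN.
Variables (C : Category) (R : Reedy C).

(* an object ([n], X): X : [n] -> C a functor with all morphisms in C_- ;
   [n] = {0,...,n} as the poset 'I_n.+1 *)
Record NObj := {
  len : nat;
  X : 'I_len.+1 -> C;
  Xm : forall i j : 'I_len.+1, i <= j -> Hom C (X i) (X j);
  Xm_id : forall (i : 'I_len.+1) (h : i <= i), Xm h = idc (X i);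
  Xm_comp : forall i j k : 'I_len.+1, forall (h1 : i <= j) (h2 : j <= k) (h3 : i <= k),
      Xm h3 = cmp (Xm h2) (Xm h1);
  Xm_minus : forall i j : 'I_len.+1, forall (h : i <= j), minus R (Xm h)
}.

Arguments X : clear implicits.

Record NHom (A B : NObj) := {
  al : 'I_(len A).+1 -> 'I_(len B).+1;
  al_mono : forall i j : 'I_(len A).+1, i <= j -> al i <= al j;
  th : forall i, Hom C (X A i) (X B (al i));
  th_plus : forall i, plus R (th i);
  th_nat : forall i j : 'I_(len A).+1, forall (h : i <= j),
      cmp (Xm (al_mono h)) (th i) = cmp (th j) (Xm h)
}.

Lemma nid_nat (A : NObj) (i j : 'I_(len A).+1) (h : i <= j) :
  cmp (Xm (n := A) h) (idc (X A i)) = cmp (idc (X A j)) (Xm h).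
Proof. by rewrite cmp_id_l cmp_id_r. Qed.

Definition nid (A : NObj) : NHom A A :=
  @Build_NHom A A (fun i => i) (fun i j h => h) (fun i => idc (X A i))
    (fun i => plus_id R (X A i)) (@nid_nat A).

Lemma ncomp_nat (A B D : NObj) (g : NHom B D) (f : NHom A B) (i j : 'I_(len A).+1) (h : i <= j) :
  cmp (Xm (al_mono g (al_mono f h))) (cmp (th g (al f i)) (th f i)) =
  cmp (cmp (th g (al f j)) (th f j)) (Xm h).
Proof.
by rewrite cmp_assoc th_nat -cmp_assoc th_nat cmp_assoc.
Qed.

Definition ncomp (A B D : NObj) (g : NHom B D) (f : NHom A B) : NHom A D :=
  @Build_NHom A D (fun i => al g (al f i))
    (fun i j h => al_mono g (al_mono f h))
    (fun i => cmp (th g (al f i)) (th f i))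
    (fun i => plus_cmp (th_plus f i) (th_plus g (al f i)))
    (@ncomp_nat A B D g f).

Definition nle (A B : NObj) (f f' : NHom A B) : Prop :=
  (forall i, al f i <= al f' i) /\
  (forall i (h : al f i <= al f' i), th f' i = cmp (Xm h) (th f i)).

Definition nequiv (A B : NObj) : relation (NHom A B) :=
  clos_refl_sym_trans (NHom A B) (@nle A B).

Definition reflects_ids (A : NObj) : Prop :=
  forall i j : 'I_(len A).+1, forall (h : i <= j), is_id (Xm h) -> i = j.

Definition DownStar : CatData :=
  @Build_CatData NObj NHom nequiv nid ncomp.

(* Down(C): quotient of the full subcategory \int N^{--,+}_+(C) *)
Definition Down : CatData :=
  @Build_CatData {A : NObj | reflects_ids A}
    (fun A B => NHom (sval A) (sval B))
    (fun A B => @nequiv (sval A) (sval B))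
    (fun A => nid (sval A)) (fun A B D => @ncomp (sval A) (sval B) (sval D)).

Definition DownIncl : Functor Down DownStar :=
  @Build_Functor Down DownStar (fun A => sval A) (fun A B f => f)
    (fun A B f g h => h)
    (fun A => rst_refl _ _ _)
    (fun A B D f g => rst_refl _ _ _).

End IntN.

(* Main.v *)
Require Import Defs.
From mathcomp Require Import all_boot zify.
From Stdlib Require Import Relation_Definitions Relation_Operators Classical ClassicalEpsilon Setoid Morphisms.

Set Implicit Arguments.
Unset Strict Implicit.
Unset Printing Implicit Defensive.

Section Proof.
Variables (C : Category) (R : Reedy C).

Lemma Xm_irr (A : NObj R) (i j : 'I_(len A).+1) (h h' : i <= j) :
  Xm (n:=A) h = Xm h'.
Proof. by rewrite (bool_irrelevance h h'). Qed.

Lemma is_id_plus (a b : C) (f : Hom C a b) : is_id f -> plus R f.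
Proof. case=> e <-; subst b; exact: plus_id. Qed.

Lemma Xm_eq_id (A : NObj R) (i j : 'I_(len A).+1) (h : i <= j) :
  i = j -> is_id (Xm (n:=A) h).
Proof. move=> e; subst j; rewrite Xm_id; by exists erefl. Qed.

Lemma no_cycle a b : reedy_lt (@minus C R) (@plus C R) a b ->
  reedy_lt (@minus C R) (@plus C R) b a -> False.
Proof.
have H : forall x, Acc (reedy_lt (@minus C R) (@plus C R)) x ->
  forall y, reedy_lt (@minus C R) (@plus C R) x y -> reedy_lt (@minus C R) (@plus C R) y x -> False.
  move=> x Hacc; induction Hacc as [x _ IH] => y hxy hyx.
  exact: (IH y hyx x hyx hxy).
move=> hab hba; exact: (H a (reedy_wf R a) b hab hba).
Qed.

Lemma minus_comp_id a b c (f : Hom C a b) (g : Hom C b c) :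
  minus R f -> minus R g -> is_id (cmp g f) -> is_id f.
Proof.
move=> mf mg [e]; subst c => /= E.
case: (classic (is_id f)) => // nf.
case: (classic (is_id g)) => [[e' Eg]|ng].
  subst b => /=; move: Eg => /= Eg.
  rewrite -Eg cmp_id_l in E; by exists erefl.
exfalso; apply: (@no_cycle a b); right; [exists g|exists f]; split => //.
Qed.

Local Notation nequiv := (@nequiv C R _ _).

Lemma nle_compl (A B D : NObj R) (g : NHom B D) (f f' : NHom A B) :
  nle f f' -> nle (ncomp g f) (ncomp g f').
Proof.
case=> h1 h2; split => /= [i|i h]; first exact: al_mono.
rewrite (h2 i (h1 i)) cmp_assoc -th_nat -cmp_assoc.
by rewrite (Xm_irr (al_mono g (h1 i)) h).
Qed.

Lemma nle_compr (A B D : NObj R) (k : NHom A B) (f f' : NHom B D) :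
  nle f f' -> nle (ncomp f k) (ncomp f' k).
Proof. case=> h1 h2; split=> /= [i|i h]; first exact: h1. by rewrite (h2 _ h) cmp_assoc. Qed.

Lemma nequiv_compl (A B D : NObj R) (g : NHom B D) (f f' : NHom A B) :
  nequiv f f' -> nequiv (ncomp g f) (ncomp g f').
Proof.
elim => [x y /(nle_compl g) H|x|x y _ IH|x y z _ IH1 _ IH2].
- exact: rst_step.
- exact: rst_refl.
- exact: rst_sym.
- exact: rst_trans IH1 IH2.
Qed.

Lemma nequiv_compr (A B D : NObj R) (k : NHom A B) (f f' : NHom B D) :
  nequiv f f' -> nequiv (ncomp f k) (ncomp f' k).
Proof.
elim => [x y /(nle_compr k) H|x|x y _ IH|x y z _ IH1 _ IH2].
- exact: rst_step.
- exact: rst_refl.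
- exact: rst_sym.
- exact: rst_trans IH1 IH2.
Qed.

Add Parametric Relation (A B : NObj R) : (NHom A B) (@Defs.nequiv C R A B)
  reflexivity proved by (rst_refl _ _) symmetry proved by (rst_sym _ _)
  transitivity proved by (rst_trans _ _) as nequiv_rel.

Add Parametric Morphism (A B D : NObj R) : (@ncomp C R A B D)
  with signature (@Defs.nequiv C R B D) ==> (@Defs.nequiv C R A B) ==> (@Defs.nequiv C R A D)
  as ncomp_mor.
Proof.
move=> g g' Hg f f' Hf.
apply: rst_trans (nequiv_compl g Hf) _; exact: nequiv_compr.
Qed.

Lemma ncomp_assoc (A B D E : NObj R) (f : NHom A B) (g : NHom B D) (h : NHom D E) :
  nequiv (ncomp h (ncomp g f)) (ncomp (ncomp h g) f).
Proof.
apply: rst_step; split => /= [i|i hh]; first exact: leqnn.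
by rewrite Xm_id cmp_id_l cmp_assoc.
Qed.

Lemma ncomp_idl (A B : NObj R) (f : NHom A B) : nequiv (ncomp (nid B) f) f.
Proof.
apply: rst_step; split => /= [i|i hh]; first exact: leqnn.
by rewrite Xm_id !cmp_id_l.
Qed.

Lemma ncomp_idr (A B : NObj R) (f : NHom A B) : nequiv (ncomp f (nid A)) f.
Proof.
apply: rst_step; split => /= [i|i hh]; first exact: leqnn.
by rewrite Xm_id cmp_id_l cmp_id_r.
Qed.

Definition niso (A B : NObj R) := exists (f : NHom A B) (g : NHom B A),
  nequiv (ncomp g f) (nid A) /\ nequiv (ncomp f g) (nid B).

Lemma niso_refl A : niso A A.
Proof. exists (nid A), (nid A); split; exact: ncomp_idl. Qed.

Lemma niso_trans A B D : niso A B -> niso B D -> niso A D.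
Proof.
move=> [f1 [g1 [e1 e1']]] [f2 [g2 [e2 e2']]].
exists (ncomp f2 f1), (ncomp g1 g2); split.
- rewrite -ncomp_assoc (ncomp_assoc f1 f2 g2) e2 ncomp_idl; exact: e1.
- rewrite -ncomp_assoc (ncomp_assoc g2 g1 f1) e1' ncomp_idl; exact: e2'.
Qed.


Section Del.
Variables (A : NObj R) (p : nat).
Hypothesis lt_p : p < len A.
Hypothesis Hp : forall (i j : 'I_(len A).+1) (h : i <= j),
  nat_of_ord i = p -> nat_of_ord j = p.+1 -> is_id (Xm h).

Definition dd (i : 'I_(len A).-1.+1) : 'I_(len A).+1 :=
  inord (if i < p then i : nat else i.+1).
Definition ss (i : 'I_(len A).+1) : 'I_(len A).-1.+1 :=
  inord (if i <= p then i : nat else i.-1).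

Lemma dd_val i : nat_of_ord (dd i) = if i < p then i : nat else i.+1.
Proof. have hi := ltn_ord i; rewrite inordK //; case: ifP => ?; lia. Qed.

Lemma ss_val i : nat_of_ord (ss i) = if i <= p then i : nat else i.-1.
Proof. have hi := ltn_ord i; rewrite inordK //; case: ifP => ?; lia. Qed.

Lemma dd_mono (i j : 'I_(len A).-1.+1) : i <= j -> dd i <= dd j.
Proof. rewrite !dd_val; case: ifP; case: ifP; lia. Qed.

Lemma ss_mono (i j : 'I_(len A).+1) : i <= j -> ss i <= ss j.
Proof. rewrite !ss_val; case: ifP; case: ifP; lia. Qed.

Lemma le_dss (i : 'I_(len A).+1) : i <= dd (ss i).
Proof. rewrite dd_val ss_val; case: ifP; case: ifP; lia. Qed.

Lemma sdd (i : 'I_(len A).-1.+1) : ss (dd i) = i.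
Proof. apply: val_inj => /=; rewrite ss_val dd_val; case: ifP; case: ifP; lia. Qed.

Definition Ad : NObj R :=
  @Build_NObj C R (len A).-1 (fun i => X (n:=A) (dd i))
    (fun i j h => Xm (n:=A) (dd_mono h))
    (fun i h => Xm_id _)
    (fun i j k h1 h2 h3 => Xm_comp _ _ _)
    (fun i j h => Xm_minus _).

Lemma key (i : 'I_(len A).+1) : is_id (Xm (n:=A) (le_dss i)).
Proof.
case: (eqVneq (nat_of_ord i) p) => e.
  apply: Hp => //; rewrite dd_val ss_val e leqnn ltnn //.
apply: Xm_eq_id; apply: val_inj => /=; rewrite dd_val ss_val.
move: e; case: ifP; case: ifP; lia.
Qed.

Lemma fd_nat (i j : 'I_(len A).+1) (h : i <= j) :
  cmp (Xm (n:=Ad) (ss_mono h)) (Xm (n:=A) (le_dss i)) =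
  cmp (Xm (n:=A) (le_dss j)) (Xm (n:=A) h).
Proof.
rewrite /= -(Xm_comp (le_dss i) (dd_mono (ss_mono h)) (leq_trans (le_dss i) (dd_mono (ss_mono h)))).
rewrite -(Xm_comp h (le_dss j) (leq_trans h (le_dss j))); exact: Xm_irr.
Qed.

Definition fd : NHom A Ad :=
  @Build_NHom C R A Ad ss ss_mono (fun i => Xm (n:=A) (le_dss i))
    (fun i => is_id_plus (key i)) fd_nat.

Lemma gd_nat (i j : 'I_(len A).-1.+1) (h : i <= j) :
  cmp (Xm (n:=A) (dd_mono h)) (idc (X (n:=A) (dd i))) =
  cmp (idc (X (n:=A) (dd j))) (Xm (n:=Ad) h).
Proof. by rewrite cmp_id_l cmp_id_r. Qed.

Definition gd : NHom Ad A :=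
  @Build_NHom C R Ad A dd dd_mono (fun i => idc (X (n:=A) (dd i)))
    (fun i => plus_id R _) gd_nat.

Lemma niso_del : niso A Ad.
Proof.
exists fd, gd; split; apply: rst_sym; apply: rst_step; split => /=.
- exact: le_dss.
- move=> i h; rewrite cmp_id_l cmp_id_r; exact: Xm_irr.
- by move=> i; rewrite sdd.
- move=> i h; rewrite !cmp_id_r; exact: Xm_irr.
Qed.

End Del.

Lemma step (A : NObj R) : ~ reflects_ids A ->
  exists A' : NObj R, len A' < len A /\ niso A A'.
Proof.
move=> Hn.
have [i [j [h [Hid Hne]]]] : exists (i j : 'I_(len A).+1) (h : i <= j), is_id (Xm (n:=A) h) /\ i <> j.
  apply: NNPP => H; apply: Hn => i j h Hid; apply: NNPP => Hne; apply: H.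
  by exists i, j, h.
have lij : i < j by rewrite ltn_neqAle h andbT; apply/eqP => e; apply: Hne; exact: val_inj.
have lp : i < len A by have := ltn_ord j; lia.
pose k : 'I_(len A).+1 := inord i.+1.
have kv : nat_of_ord k = i.+1 by rewrite inordK //; lia.
have hik : i <= k by rewrite kv.
have hkj : k <= j by rewrite kv.
have Hik : is_id (Xm (n:=A) hik).
  apply: (@minus_comp_id _ _ _ _ (Xm (n:=A) hkj)); try exact: Xm_minus.
  by rewrite -(Xm_comp hik hkj h).
have Hp : forall (i' j' : 'I_(len A).+1) (h' : i' <= j'),
    nat_of_ord i' = i -> nat_of_ord j' = i.+1 -> is_id (Xm h').
  move=> i' j' h' e1 e2.
  have E1 : i' = i by exact: val_inj.
  have E2 : j' = k by apply: val_inj; rewrite /= e2 kv.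
  subst i' j'; by rewrite (Xm_irr h' hik).
eexists; split; last exact: (niso_del lp Hp).
rewrite /=; lia.
Qed.

Lemma ex_red_n n : forall A : NObj R, len A <= n ->
  exists B : {B : NObj R | reflects_ids B}, niso A (sval B).
Proof.
elim: n => [|n IH] A hA; case: (classic (reflects_ids A)) => HA.
- by exists (exist _ A HA); exact: niso_refl.
- have [A' [hl _]] := step HA; lia.
- by exists (exist _ A HA); exact: niso_refl.
- have [A' [hl hi]] := step HA.
  have [B hB] := IH A' ltac:(lia).
  exists B; exact: niso_trans hi hB.
Qed.

Lemma ex_red (A : NObj R) : exists B : {B : NObj R | reflects_ids B}, niso A (sval B).
Proof. exact: (@ex_red_n (len A)). Qed.


Definition GB (A : NObj R) : {B : NObj R | reflects_ids B} :=
  proj1_sig (constructive_indefinite_description _ (ex_red A)).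
Lemma GB_iso A : niso A (sval (GB A)).
Proof. exact: (proj2_sig (constructive_indefinite_description _ (ex_red A))). Qed.
Definition Gf (A : NObj R) : NHom A (sval (GB A)) :=
  proj1_sig (constructive_indefinite_description _ (GB_iso A)).
Lemma Gf_spec A : exists g : NHom (sval (GB A)) A,
  nequiv (ncomp g (Gf A)) (nid A) /\ nequiv (ncomp (Gf A) g) (nid _).
Proof. exact: (proj2_sig (constructive_indefinite_description _ (GB_iso A))). Qed.
Definition Gg (A : NObj R) : NHom (sval (GB A)) A :=
  proj1_sig (constructive_indefinite_description _ (Gf_spec A)).
Lemma Gfg A : nequiv (ncomp (Gg A) (Gf A)) (nid A) /\
  nequiv (ncomp (Gf A) (Gg A)) (nid _).
Proof. exact: (proj2_sig (constructive_indefinite_description _ (Gf_spec A))). Qed.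

Definition Gm (A B : NObj R) (h : NHom A B) : NHom (sval (GB A)) (sval (GB B)) :=
  ncomp (Gf B) (ncomp h (Gg A)).

Lemma Gm_proper (A B : NObj R) (f g : NHom A B) : nequiv f g -> nequiv (Gm f) (Gm g).
Proof. move=> H; rewrite /Gm H; reflexivity. Qed.

Lemma Gm_id (A : NObj R) : nequiv (Gm (nid A)) (nid _).
Proof. rewrite /Gm ncomp_idl; exact: (Gfg A).2. Qed.

Lemma Gm_comp (A B D : NObj R) (f : NHom A B) (g : NHom B D) :
  nequiv (Gm (ncomp g f)) (ncomp (Gm g) (Gm f)).
Proof.
rewrite /Gm !ncomp_assoc -(ncomp_assoc (Gf B) (Gg B)) (Gfg B).1 ncomp_idr.
reflexivity.
Qed.

Definition Gfun : Functor (DownStar R) (Down R) :=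
  @Build_Functor (DownStar R) (Down R) GB (fun A B h => Gm h)
    (fun A B f g H => Gm_proper H) (fun A => Gm_id A)
    (fun A B D f g => Gm_comp f g).

Theorem lemma6p2_aux : is_equivalence (DownIncl R).
Proof.
exists Gfun.
exists (fun a => Gf (sval a)), (fun a => Gg (sval a)).
exists (fun d => Gg d), (fun d => Gf d).
split; split => /=.
- move=> a; exact: (Gfg _).1.
- move=> a; exact: (Gfg _).2.
- move=> a b f; rewrite /Gm !ncomp_assoc -(ncomp_assoc (Gf _) (Gg _)) (Gfg _).1 ncomp_idr.
  reflexivity.
- move=> d; exact: (Gfg _).2.
- move=> d; exact: (Gfg _).1.
- move=> d e g; rewrite /Gm !ncomp_assoc (Gfg _).1 ncomp_idl; reflexivity.
Qed.

End Proof.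

Theorem lemma6p2 (C : Category) (R : Reedy C) :
  is_equivalence (DownIncl R).
Proof. exact: lemma6p2_aux. Qed.
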